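(* Consider counterexamples of the following form: $G$ is a planar graph containing no $3$-cycle, $4$-cycle and $5$-cycle that are pairwise adjacent, $C_0$ is a $3$-cycle of $G$, $s\ge1$, $H$ is a cover of $G$ with respect to $L(v)=\{1,\dots,s\}$ for all $v$, $F=(f_1,\dots,f_s)$ with $f_i(v)\in\{0,1,2\}$ and $f_1(v)+\cdots+f_s(v)\ge4$ for all $v$, and $R_0$ is a DP-$F$-coloring of $C_0$ (with respect to the restriction of $H$ to the vertices over $V(C_0)$) that cannot be extended to a DP-$F$-coloring of $(G,H)$. If such a counterexample has $|V(G)|$ minimum, then every vertex of $G$ not on $C_0$ has degree at least $4$.
   Context: Two cycles are adjacent if they share an edge. A cover $H$ of $G$ w.r.t. $L$ has vertex set $\{(u,c):c\in L(u)\}$, each $\{u\}\times L(u)$ is a clique, for each edge $uv$ the edges between $\{u\}\times L(u)$ and $\{v\}\times L(v)$ form a matching, and there are no such edges for non-adjacent $u,v$. A representative set contains exactly one vertex of each $\{v\}\times L(v)$. A DP-$F$-coloring is a representative set $R$ admitting an ordering in which each $(v,i)\in R$ has fewer than $f_i(v)$ $H$-neighbors among earlier elements of $R$; extending $R_0$ means finding a DP-$F$-coloring of $(G,H)$ containing $R_0$. *)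

(* Defs.v *)
From HB Require Import structures.
From mathcomp Require Import all_boot all_order all_algebra.
From mathcomp Require Import classical_sets topology normedtype Rstruct Rstruct_topology.
From Stdlib Require Import Rdefinitions.

Set Implicit Arguments.
Unset Strict Implicit.
Unset Printing Implicit Defensive.

Import Order.TTheory GRing.Theory Num.Theory.

Definition simple_graph (T : finType) (G : rel T) : Prop :=
  symmetric G /\ irreflexive G.

(* Planarity: a drawing in the real plane R^2.  Vertices go to distinct points,
   each edge uv to a Jordan arc (continuous injective map on [0,1]) from p u to p v
   (the arc for vu is the reverse of the arc for uv); the interior of an arc
   meets no vertex point, and interiors of arcs of distinct edges are disjoint. *)
Local Open Scope ring_scope.
Definition planar (T : finType) (G : rel T) : Prop :=
  exists (p : T -> (R * R)%type) (a : T -> T -> R -> (R * R)%type),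
    injective p /\
    (forall u v, G u v ->
       [/\ a u v 0 = p u /\ a u v 1 = p v,
           {within [set t : R | 0 <= t <= 1], continuous (a u v)}%classic,
           (forall t t', 0 <= t <= 1 -> 0 <= t' <= 1 -> a u v t = a u v t' -> t = t'),
           (forall t, 0 <= t <= 1 -> a v u t = a u v (1 - t)) &
           (forall t w, 0 < t < 1 -> a u v t <> p w)]) /\
    (forall u v x y, G u v -> G x y -> [set u; v] != [set x; y] ->
       forall t t', 0 < t < 1 -> 0 < t' < 1 -> a u v t <> a x y t').
Local Close Scope ring_scope.

Definition is_kcycle (T : finType) (G : rel T) (k : nat) (c : seq T) : Prop :=
  [/\ 3 <= k, size c = k, uniq c & cycle G c].

Definition cycle_edge (T : finType) (c : seq T) (x y : T) : bool :=
  ((x \in c) && (y == next c x)) || ((y \in c) && (x == next c y)).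

Definition adjacent_cycles (T : finType) (c1 c2 : seq T) : Prop :=
  exists x y, cycle_edge c1 x y /\ cycle_edge c2 x y.

Definition no_adj_345 (T : finType) (G : rel T) : Prop :=
  ~ exists c3 c4 c5 : seq T,
      [/\ is_kcycle G 3 c3 /\ is_kcycle G 4 c4 /\ is_kcycle G 5 c5,
          adjacent_cycles c3 c4, adjacent_cycles c3 c5 & adjacent_cycles c4 c5].

(* H is a cover of G w.r.t. L(v) = {1,...,s} for all v; colours are represented by
   'I_s = {0,...,s-1}, so (v, c) stands for (v, c+1). *)
Definition is_cover (T : finType) (G : rel T) (s : nat) (H : rel (T * 'I_s)) : Prop :=
  [/\ simple_graph H,
      (forall v (c d : 'I_s), c != d -> H (v, c) (v, d)),
      (forall u v, u != v -> G u v -> forall c : 'I_s,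
          #|[set d : 'I_s | H (u, c) (v, d)]| <= 1) &
      (forall u v, u != v -> ~~ G u v -> forall c d : 'I_s, ~~ H (u, c) (v, d))].

(* R is a DP-F-colouring of the cover H restricted to the fibres over S:
   R is a representative set over S (exactly one element in each fibre {v} x L(v),
   v in S, and nothing else), admitting an ordering in which each (v,i) in R has
   fewer than f_i(v) H-neighbours among the earlier elements. *)
Definition dp_coloring (T : finType) (s : nat) (H : rel (T * 'I_s))
    (f : 'I_s -> T -> nat) (S : {set T}) (R : {set T * 'I_s}) : Prop :=
  [/\ R \subset [set x | x.1 \in S],
      (forall v, v \in S -> #|[set c : 'I_s | (v, c) \in R]| = 1) &
      exists ord : seq (T * 'I_s),
        perm_eq ord (enum R) /\
        forall pre x post, ord = pre ++ x :: post ->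
          #|[set y in pre | H y x]| < f x.2 x.1].

Definition counterexample (T : finType) (G : rel T) (C0 : seq T) (s : nat)
    (H : rel (T * 'I_s)) (f : 'I_s -> T -> nat) (R0 : {set T * 'I_s}) : Prop :=
  [/\ simple_graph G /\ planar G /\ no_adj_345 G, is_kcycle G 3 C0,
      1 <= s /\ is_cover G H,
      [/\ forall i v, f i v <= 2 & forall v, 4 <= \sum_(i < s) f i v] /\
      dp_coloring H f [set x in C0] R0 &
      ~ exists R, dp_coloring H f [set: T] R /\ R0 \subset R].

(* Main.v *)
Require Import Defs.
From mathcomp Require Import all_boot all_order.
Set Implicit Arguments. Unset Strict Implicit. Unset Printing Implicit Defensive.

Definition ordP (A : finType) (HA : rel A) (fA : A -> nat) (R : {set A}) : Prop :=
  exists ord : seq A, perm_eq ord (enum R) /\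
    forall pre x post, ord = pre ++ x :: post -> #|[set y in pre | HA y x]| < fA x.

Lemma preim_seq (A B : eqType) (h : A -> B) (s : seq B) :
  (forall y, y \in s -> exists x, h x = y) -> exists t, map h t = s.
Proof.
elim: s => [|y s IH] H; first by exists [::].
have [x hx] := H y (mem_head _ _).
have [t ht] : exists t, map h t = s by apply: IH => z zs; apply: H; rewrite inE zs orbT.
by exists (x :: t); rewrite /= hx ht.
Qed.

Lemma card_map_set (A B : finType) (h : A -> B) (hinj : injective h)
  (HA : rel A) (HB : rel B) (HAB : forall x y, HA x y = HB (h x) (h y))
  (pre : seq A) x :
  #|[set y in map h pre | HB y (h x)]| = #|[set y in pre | HA y x]|.
Proof.
rewrite -(card_imset _ hinj); apply: eq_card => z; rewrite !inE.
apply/andP/imsetP.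
- move=> [/mapP [y yp ->] Hy]; exists y => //; by rewrite inE yp HAB.
- move=> [y]; rewrite inE => /andP [yp Hy] ->; by rewrite map_f // -HAB Hy.
Qed.

Lemma P_map (A B : finType) (h : A -> B) (hinj : injective h)
  (HA : rel A) (HB : rel B) (HAB : forall x y, HA x y = HB (h x) (h y))
  (fA : A -> nat) (fB : B -> nat) (fAB : forall x, fA x = fB (h x)) (s : seq A) :
  (forall pre x post, s = pre ++ x :: post -> #|[set y in pre | HA y x]| < fA x) <->
  (forall pre x post, map h s = pre ++ x :: post -> #|[set y in pre | HB y x]| < fB x).
Proof.
split.
- move=> P pre x post E.
  have Ep : take (size pre) s ++ drop (size pre) s = s by rewrite cat_take_drop.
  have Et : map h (take (size pre) s) = pre by rewrite map_take E take_size_cat.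
  have Ed : map h (drop (size pre) s) = x :: post by rewrite map_drop E drop_size_cat.
  case Ds : (drop (size pre) s) Ed => [|x' post'] //= [hx _].
  rewrite -Et -hx (card_map_set hinj HAB) -fAB; apply: (P _ _ post').
  by rewrite -Ds cat_take_drop.
- move=> P pre x post E.
  rewrite -(card_map_set hinj HAB) fAB; apply: (P _ _ (map h post)).
  by rewrite E map_cat.
Qed.

Lemma ordP_transfer (A B : finType) (h : A -> B) (hinj : injective h)
  (HA : rel A) (HB : rel B) (HAB : forall x y, HA x y = HB (h x) (h y))
  (fA : A -> nat) (fB : B -> nat) (fAB : forall x, fA x = fB (h x)) (R : {set A}) :
  ordP HA fA R <-> ordP HB fB (h @: R).
Proof.
have Pm : perm_eq (map h (enum R)) (enum (h @: R)).
  apply: uniq_perm; first by rewrite (map_inj_uniq hinj) enum_uniq.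
    exact: enum_uniq.
  move=> z; rewrite mem_enum; apply/mapP/imsetP.
    by move=> [y]; rewrite mem_enum => yR ->; exists y.
  by move=> [y yR ->]; exists y; rewrite ?mem_enum.
split.
- move=> [ord [po P]]; exists (map h ord); split.
    exact: perm_trans (perm_map h po) Pm.
  by apply/(P_map hinj HAB fAB).
- move=> [ord [po P]].
  have [t ht] : exists t, map h t = ord.
    apply: preim_seq => y; rewrite (perm_mem po) mem_enum => /imsetP [x _ ->].
    by exists x.
  exists t; split.
    apply: (perm_map_inj hinj); rewrite ht.
    by apply: perm_trans po _; rewrite perm_sym.
  by apply/(P_map hinj HAB fAB); rewrite ht.
Qed.

Lemma P_rcons (A : finType) (HA : rel A) (fA : A -> nat) (s : seq A) x :
  (forall pre x post, s = pre ++ x :: post -> #|[set y in pre | HA y x]| < fA x) ->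
  #|[set y in s | HA y x]| < fA x ->
  (forall pre z post, rcons s x = pre ++ z :: post -> #|[set y in pre | HA y z]| < fA z).
Proof.
move=> P Hx pre z post; case/lastP: post => [|post w].
- rewrite cats1 => /eqP; rewrite eqseq_rcons => /andP [/eqP <- /eqP <-] //.
- rewrite -rcons_cons -rcons_cat => /eqP; rewrite eqseq_rcons.
  by move=> /andP [/eqP E _]; apply: (P _ _ post).
Qed.

Lemma sumb_card (I : finType) (A : {pred I}) (P : pred I) :
  \sum_(i in A) (P i : nat) = #|[set i in A | P i]|.
Proof.
rewrite -sum1dep_card big_mkcondr /=; apply: eq_bigr => i _; by case: (P i).
Qed.

Lemma extend (T : finType) (G : rel T) s (H : rel (T * 'I_s)) (f : 'I_s -> T -> nat)
  v (Rold : {set T * 'I_s}) :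
  symmetric G -> is_cover G H ->
  (forall x, x \in Rold -> x.1 != v) ->
  (forall u, u != v -> #|[set c | (u,c) \in Rold]| = 1) ->
  ordP H (fun x => f x.2 x.1) Rold ->
  #|[set u | G v u]| < 4 -> 4 <= \sum_(i < s) f i v ->
  exists i, dp_coloring H f [set: T] ((v,i) |: Rold).
Proof.
move=> Gsym [_ _ Hm Hn] Rv Rfib [ord [po P]] deg sum.
pose N i := #|[set y in Rold | H y (v,i)]|.
have cnt : \sum_(i < s) N i <= #|[set u | G v u]|.
  rewrite (eq_bigr (fun i => \sum_(y in Rold) (H y (v,i) : nat))); last first.
    by move=> i _; rewrite sumb_card.
  rewrite exchange_big /=.
  apply: (@leq_trans (\sum_(y in Rold) (G v y.1 : nat))).
    apply: leq_sum => [[u c]] yR /=.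
    rewrite (sumb_card 'I_s (fun i => H (u, c) (v, i))).
    have uv := Rv _ yR.
    case Guv: (G v u).
      by rewrite Gsym in Guv; apply: Hm.
    rewrite leqn0 cards_eq0; apply/eqP/setP => d; rewrite !inE; apply/negbTE/Hn => //.
    by rewrite Gsym Guv.
  rewrite sumb_card -(@card_in_imset _ _ fst).
    apply: subset_leq_card; apply/subsetP => u /imsetP [y]; rewrite !inE => /andP [_ Gy] ->.
    exact: Gy.
  move=> [u1 c1] [u2 c2]; rewrite !inE /= => /andP[y1R _] /andP[y2R _] E; subst u2.
  have /cards1P [c0 Ec] : #|[set c | (u1,c) \in Rold]| == 1 by rewrite Rfib ?(Rv _ y1R).
  have : c1 \in [set c | (u1,c) \in Rold] by rewrite inE.
  have : c2 \in [set c | (u1,c) \in Rold] by rewrite inE.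
  by rewrite Ec !inE => /eqP -> /eqP ->.
have [i Hi|none] := pickP (fun i : 'I_s => N i < f i v); last first.
  exfalso.
  have : \sum_(i < s) f i v <= \sum_(i < s) N i.
    by apply: leq_sum => i _; rewrite leqNgt none.
  move/(leq_trans sum)/leq_trans/(_ cnt); by rewrite leqNgt deg.
exists i; split.
- by apply/subsetP => x _; rewrite !inE.
- move=> u _; case: (eqVneq u v) => [->|uv].
  + rewrite (_ : [set c | _] = [set i]) ?cards1 //; apply/setP => c.
    rewrite !inE xpair_eqE eqxx /=.
    case E: ((v,c) \in Rold); last by rewrite orbF.
    by have := Rv _ E; rewrite eqxx.
  + rewrite -(Rfib u uv); apply: eq_card => c; rewrite !inE xpair_eqE (negbTE uv).
    by [].
- exists (rcons ord (v,i)); split.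
  + apply: uniq_perm.
    * rewrite rcons_uniq (perm_uniq po) enum_uniq andbT (perm_mem po) mem_enum.
      by apply/negP => /Rv; rewrite eqxx.
    * exact: enum_uniq.
    * move=> z; rewrite mem_rcons in_cons mem_enum in_setU1 (perm_mem po) mem_enum.
      by [].
  + apply: (P_rcons (fA := fun x => f x.2 x.1)) => //.
    rewrite (_ : [set y in ord | _] = [set y in Rold | H y (v,i)]) //.
    by apply/setP => y; rewrite !inE (perm_mem po) mem_enum.
Qed.

Lemma planar_sub (T : finType) (G : rel T) (P : pred T) :
  planar G -> planar (fun x y : {x | P x} => G (val x) (val y)).
Proof.
move=> [p [a [pinj [Hedge Hdist]]]].
exists (fun x => p (val x)), (fun x y => a (val x) (val y)).
split; first by move=> x y /pinj /val_inj.
split.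
  move=> u w /Hedge [h1 h2 h3 h4 h5]; split => // t z ht; exact: h5.
move=> u w x y Guw Gxy neq t t' ht ht'; apply: Hdist => //.
apply: contra neq => /eqP E; apply/eqP; apply: (imset_inj val_inj).
by rewrite !imsetU1 !imset_set1.
Qed.

Lemma kcycle_map (T : finType) (G : rel T) (P : pred T) k (c : seq {x | P x}) :
  is_kcycle (fun x y : {x | P x} => G (val x) (val y)) k c -> is_kcycle G k (map val c).
Proof.
move=> [k3 sz un cy]; split => //; first by rewrite size_map.
  by rewrite (map_inj_uniq val_inj).
by rewrite cycle_map.
Qed.

Lemma cedge_map (T : finType) (P : pred T) (c : seq {x | P x}) x y :
  uniq c -> cycle_edge c x y -> cycle_edge (map val c) (val x) (val y).
Proof.
move=> un; rewrite /cycle_edge !(mem_map val_inj) !next_map // ?val_eqE //; exact: val_inj.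
Qed.

Lemma no_adj_sub (T : finType) (G : rel T) (P : pred T) :
  no_adj_345 G -> no_adj_345 (fun x y : {x | P x} => G (val x) (val y)).
Proof.
move=> N [c3 [c4 [c5 [[k3 [k4 k5]] a34 a35 a45]]]]; apply: N.
exists (map val c3), (map val c4), (map val c5).
have u3 : uniq c3 by case: k3.
have u4 : uniq c4 by case: k4.
have u5 : uniq c5 by case: k5.
split.
- by split; [|split]; apply: kcycle_map.
- by case: a34 => x [y [e1 e2]]; exists (val x), (val y); split; apply: cedge_map.
- by case: a35 => x [y [e1 e2]]; exists (val x), (val y); split; apply: cedge_map.
- by case: a45 => x [y [e1 e2]]; exists (val x), (val y); split; apply: cedge_map.
Qed.

Theorem lemma4 (T : finType) (G : rel T) (C0 : seq T) (s : nat)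
    (H : rel (T * 'I_s)) (f : 'I_s -> T -> nat) (R0 : {set T * 'I_s}) :
  counterexample G C0 H f R0 ->
  (forall (T' : finType) (G' : rel T') (C0' : seq T') (s' : nat)
          (H' : rel (T' * 'I_s')) (f' : 'I_s' -> T' -> nat) (R0' : {set T' * 'I_s'}),
      counterexample G' C0' H' f' R0' -> #|T| <= #|T'|) ->
  forall v : T, v \notin C0 -> 4 <= #|[set u | G v u]|.
Proof.
move=> [[sG [pG nG]] kC0 [s1 cov] [[f2 f4] dp0] noext] Hmin v vC0.
rewrite leqNgt; apply/negP => deg.
pose T' := {x : T | x != v}.
pose h := fun x : T' * 'I_s => (val x.1, x.2).
have hinj : injective h by move=> [a c] [b d] [/val_inj -> ->].
pose G' : rel T' := fun x y => G (val x) (val y).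
pose H' : rel (T' * 'I_s) := fun x y => H (h x) (h y).
pose f' := fun i (x : T') => f i (val x).
have [C0' EC0] : exists c : seq T', map val c = C0.
  apply: preim_seq => y yC.
  have yv : y != v by apply: contraNneq vC0 => <-.
  by exists (Sub y yv : T'); rewrite SubK.
case: dp0 => [sub0 fib0 ord0].
pose R0' := h @^-1: R0.
have ER0 : h @: R0' = R0.
  apply/setP => x; apply/imsetP/idP => [[y]|xR]; first by rewrite inE => yR ->.
  case: x xR => u c xR.
  have : u \in C0 by have := subsetP sub0 _ xR; rewrite !inE.
  move=> uC; have uv : u != v by apply: contraNneq vC0 => <-.
  exists (Sub u uv : T', c); last by [].
  by rewrite inE.
have CE' : counterexample G' C0' H' f' R0'.
  have [[Hsym Hirr] Hcl Hm Hn] := cov.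
  split.
  - split; first by split; [move=> x y; exact: sG.1 | move=> x; exact: sG.2].
    split; [exact: planar_sub | exact: no_adj_sub].
  - case: kC0 => k3 sz un cy; split => //.
    + by rewrite -sz -EC0 size_map.
    + by rewrite -(map_inj_uniq val_inj) EC0.
    + by move: cy; rewrite -EC0 cycle_map.
  - split => //; split.
    + by split; [move=> x y; exact: Hsym | move=> x; exact: Hirr].
    + move=> u c d cd; exact: Hcl.
    + move=> u w uw Guw c; apply: Hm => //; by rewrite val_eqE.
    + move=> u w uw Guw c d; apply: Hn => //; by rewrite val_eqE.
  - split; first by split; [move=> i x; exact: f2 | move=> x; exact: f4].
    split.
    + apply/subsetP => x; rewrite inE => xR.
      have := subsetP sub0 _ xR; rewrite !inE /= -EC0 (mem_map val_inj).
      by [].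
    + move=> u; rewrite inE => uC.
      rewrite -(fib0 (val u)); last by rewrite inE -EC0 map_f.
      by apply: eq_card => c; rewrite !inE.
    + have := proj2 (ordP_transfer hinj (HA:=H') (HB:=H) (fun _ _ => erefl)
         (fA:=fun x => f' x.2 x.1) (fB:=fun x => f x.2 x.1) (fun _ => erefl) R0').
      rewrite ER0; apply; exact: ord0.
  - move=> [R' [[subR' fibR' ordR'] R0R']]; apply: noext.
    have Rv : forall x, x \in h @: R' -> x.1 != v.
      by move=> x /imsetP [y _ ->]; exact: (valP y.1).
    have Rfib : forall u, u != v -> #|[set c | (u,c) \in h @: R']| = 1.
      move=> u uv; rewrite -(fibR' (Sub u uv) (in_setT _)).
      apply: eq_card => c; rewrite !inE.
      have -> : (u,c) = h (Sub u uv, c) by [].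
      by rewrite mem_imset.
    have ordRold := proj1 (ordP_transfer hinj (HA:=H') (HB:=H) (fun _ _ => erefl)
         (fA:=fun x => f' x.2 x.1) (fB:=fun x => f x.2 x.1) (fun _ => erefl) R') ordR'.
    have [i dpi] := extend sG.1 cov Rv Rfib ordRold deg (f4 v).
    exists ((v,i) |: h @: R'); split => //.
    rewrite -ER0; apply: subset_trans (imsetS h R0R') _; exact: subsetUr.
have := Hmin _ _ _ _ _ _ _ CE'.
rewrite card_sig.
have -> : #|[pred x | x != v]| = #|T|.-1 by rewrite -(cardC1 v); apply: eq_card.
have T0 : 0 < #|T| by apply/card_gt0P; exists v.
move=> le; suff : #|T| < #|T| by rewrite ltnn.
apply: leq_ltn_trans le _; by rewrite ltn_predL.
Qed.
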